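(* Let $G_{\tan\cup\sec}$ be the $q$-grammar with master variables $\{x,y\}$, rule $x_j\mapsto q^j(1+x_jx_{j+1})$, $y_j\mapsto q^jx_jy_{j+1}$ ($j\ge0$), and order DIO, with $q$-derivative $D$, and let $\Omega(D^n(x_0))$ be the number of terms of $D^n(x_0)$. Then for $n\ge3$, \[ \Omega(D^n(x_0))=\begin{cases}2k^3+5k^2+2,& n=2k+1,\\ (k+2)(2k^2-2k+1),& n=2k.\end{cases} \]
   Context: $\mathbb{K}$ is a commutative ring with unity and characteristic zero, $q$ an indeterminate. For a set $S$ of master variables, $\mathbb{S}=\{s_i:s\in S,\ i\ge0\}$ is a set of non-commuting variables, $F(\mathbb{S})$ the free group on $\mathbb{S}$, $\mathbb{E}=\mathbb{K}[q][F(\mathbb{S})]$ its group algebra. A rule $R$ assigns to each $s_i$ an element of $\mathbb{E}$. The up-arrow $\uparrow$ is the linear map replacing each letter $s_i^{\pm1}$ of a word by $s_{i+1}^{\pm1}$. DIO is the order that stably reorders the letters of a word according to the position of their underlying variable in the sequence $\dots,x_2,y_2,x_1,y_1,x_0,y_0$ (extended linearly). The $q$-derivative of a $q$-grammar $(S,R,\rho)$ is the $\mathbb{K}[q]$-linear map with $D(w_1\cdots w_n)=\sum_{j=1}^n\rho\big(w_1\cdots w_{j-1}R(w_j)\uparrow(w_{j+1}\cdots w_n)\big)$ for letters $w_j$, $D^0=\mathrm{id}$, $D^k=D\circ D^{k-1}$. Writing an element of $\mathbb{E}$ as $\sum_{w\in F(\mathbb{S})}a_ww$, its terms are the words $w$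 (including possibly the empty word) with $a_w\ne0$. *)

(* Defs.v *)
From mathcomp Require Import all_boot all_order all_algebra.
Set Implicit Arguments. Unset Strict Implicit. Unset Printing Implicit Defensive.
Import GRing.Theory.
Local Open Scope ring_scope.

(* A letter s_i with master variable s in {x,y}: (false,i) = x_i, (true,i) = y_i.
   Only positive letters occur in D^n(x_0) for this grammar. *)
Definition letter := (bool * nat)%type.
Definition word := seq letter.

Definition up (w : word) : word := [seq (l.1, l.2.+1) | l <- w].

(* DIO: ..., x_2, y_2, x_1, y_1, x_0, y_0 *)
Definition dio_le (a b : letter) : bool :=
  (b.2 < a.2)%N || ((a.2 == b.2) && (a.1 ==> b.1)).
Definition rho (w : word) : word := sort dio_le w.

Section Grammar.
Variable K : comNzRingType.

(* formal K[q]-linear combinations of words; q is the polynomial variable 'X *)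
Definition expr := seq (word * {poly K}).

Definition Rts (l : letter) : expr :=
  let j := l.2 in
  if ~~ l.1 then [:: ([::], 'X^j); ([:: (false, j); (false, j.+1)], 'X^j)]
  else [:: ([:: (false, j); (true, j.+1)], 'X^j)].

Fixpoint Draw (w : word) : expr :=
  match w with
  | [::] => [::]
  | a :: w' => [seq (t.1 ++ up w', t.2) | t <- Rts a]
               ++ [seq (a :: t.1, t.2) | t <- Draw w']
  end.

Definition Dword (w : word) : expr := [seq (rho t.1, t.2) | t <- Draw w].

Definition Dexpr (e : expr) : expr :=
  flatten [seq [seq (u.1, t.2 * u.2) | u <- Dword t.1] | t <- e].

Definition Dpow (n : nat) (e : expr) : expr := iter n Dexpr e.

Definition x0 : expr := [:: ([:: (false, 0%N)], 1)].

Definition coefw (e : expr) (w : word) : {poly K} := \sum_(t <- e | t.1 == w) t.2.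

Definition terms (e : expr) : seq word :=
  [seq w <- undup [seq t.1 | t <- e] | coefw e w != 0].

Definition Omega (e : expr) : nat := size (terms e).
End Grammar.

(* Main.v *)
Require Import Defs.
From mathcomp Require Import all_boot all_order all_algebra.
From mathcomp Require Import zify.
Import GRing.Theory.

Set Implicit Arguments. Unset Strict Implicit. Unset Printing Implicit Defensive.
Local Open Scope ring_scope.

Definition RtsW (l : letter) : seq word :=
  if ~~ l.1 then [:: [::]; [:: (false, l.2); (false, l.2.+1)]]
  else [:: [:: (false, l.2); (true, l.2.+1)]].

Fixpoint DrawW (w : word) : seq word :=
  match w with
  | [::] => [::]
  | a :: w' => [seq r ++ up w' | r <- RtsW a] ++ [seq a :: u | u <- DrawW w']
  end.

Definition succ (w : word) : seq word := map rho (DrawW w).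

Fixpoint W (n : nat) : seq word :=
  match n with
  | 0 => [:: [:: (false, 0%N)]]
  | n'.+1 => flatten (map succ (W n'))
  end.

Lemma Rts_fst (K : comNzRingType) l : map fst (Rts K l) = RtsW l.
Proof. by case: l => [[] j]. Qed.

Lemma Draw_fst (K : comNzRingType) w : map fst (Draw K w) = DrawW w.
Proof.
elim: w => [|a w IH] //=.
rewrite map_cat -!map_comp /= -IH -(Rts_fst K a) -!map_comp.
congr (_ ++ _); apply: eq_map => t //.
Qed.

Lemma Dexpr_fst (K : comNzRingType) (e : expr K) :
  map fst (Dexpr e) = flatten (map succ (map fst e)).
Proof.
rewrite /Dexpr map_flatten -!map_comp; congr flatten; apply: eq_map => t /=.
rewrite -map_comp /Dword /succ -(Draw_fst K) -!map_comp; apply: eq_map => u //.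
Qed.

Lemma Dpow_fst (K : comNzRingType) n : map fst (Dpow n (x0 K)) = W n.
Proof.
elim: n => [|n IH] //=.
by rewrite /Dpow /= Dexpr_fst -IH.
Qed.

Lemma Draw_one (K : comNzRingType) w : all (fun u => (u.2).[1] == 1) (Draw K w).
Proof.
elim: w => [|a w IH] //=.
rewrite all_cat; apply/andP; split.
  rewrite all_map; case: a => [[] j] /=; rewrite hornerXn expr1n ?eqxx //.
by rewrite all_map; apply: sub_all IH => u.
Qed.

Lemma Dpow_one (K : comNzRingType) n : all (fun u => (u.2).[1] == 1) (Dpow n (x0 K)).
Proof.
elim: n => [|n IH] /=; first by rewrite hornerC eqxx.
rewrite /Dpow /= /Dexpr.
apply/allP => u /flatten_mapP [t Ht] /mapP [v Hv ->] /=.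
rewrite hornerM (eqP (allP IH t Ht)) mul1r.
move: Hv; rewrite /Dword => /mapP [v' Hv' ->] /=.
exact: (allP (Draw_one K t.1) v' Hv').
Qed.

Lemma coefw_one (K : comNzRingType) (e : expr K) w :
  all (fun u => (u.2).[1] == 1) e -> (coefw e w).[1] = (count (fun t => t.1 == w) e)%:R.
Proof.
rewrite /coefw; elim: e => [|t e IH] /=; first by rewrite big_nil horner0.
move=> /andP [/eqP H1 H2]; rewrite big_cons.
case: (t.1 == w) => /=; last exact: IH.
by rewrite hornerD H1 IH // natrD.
Qed.

Lemma Omega_undup (K : comNzRingType) (charK0 : forall m : nat, ((m.+1)%:R != 0 :> K)%R) (e : expr K) :
  all (fun u => (u.2).[1] == 1) e -> Omega e = size (undup (map fst e)).
Proof.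
move=> H; rewrite /Omega /terms; congr size; apply/all_filterP/allP => w.
rewrite mem_undup => /mapP [t Ht ->].
apply/negP => /eqP H0.
have := coefw_one t.1 H; rewrite H0 horner0.
have : (0 < count (fun t0 => t0.1 == t.1) e)%N.
  by rewrite -has_count; apply/hasP; exists t.
case: (count _ _) => // m _ Hm.
by move: (charK0 m); rewrite -Hm eqxx.
Qed.
Local Close Scope ring_scope.

Definition mk (a c d : nat) : word := nseq c (false, a.+1) ++ nseq d (false, a).

Lemma dio_total : total dio_le.
Proof.
move=> [x i] [y j]; rewrite /dio_le /=.
case: (ltngtP i j) => //= _; case: x; case: y => //.
Qed.

Lemma dio_trans : transitive dio_le.
Proof.
move=> [x i] [y j] [z k]; rewrite /dio_le /=.
case: x; case: y; case: z => /=; rewrite ?andbT ?andbF ?orbF; lia.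
Qed.

Lemma dio_anti : antisymmetric dio_le.
Proof.
move=> [x i] [y j]; rewrite /dio_le /=.
case: x; case: y => /=; rewrite ?andbT ?andbF ?orbF; try lia.
- move=> H; have -> : i = j by lia. by [].
- move=> H; have -> : i = j by lia. by [].
Qed.

Lemma pairwise_nseq (r : rel letter) n x : r x x -> pairwise r (nseq n x).
Proof.
move=> H; elim: n => // n IH /=; rewrite IH andbT.
by apply/allP => y; rewrite mem_nseq => /andP [_ /eqP ->].
Qed.

Lemma sorted_mk a c d : sorted dio_le (mk a c d).
Proof.
rewrite (sorted_pairwise dio_trans) /mk pairwise_cat.
rewrite !pairwise_nseq ?andbT /dio_le ?ltnn ?eqxx //=.
apply/allrelP => x y; rewrite !mem_nseq => /andP [_ /eqP ->] /andP [_ /eqP ->].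
by rewrite /= ltnSn.
Qed.

Lemma rho_perm s a c d : perm_eq s (mk a c d) -> rho s = mk a c d.
Proof.
rewrite /rho => /(perm_sortP dio_total dio_trans dio_anti) ->.
have := @sorted_sort _ _ dio_trans _ (sorted_mk a c d). by [].
Qed.

Lemma up_nseq k (b : bool) j : up (nseq k (b, j)) = nseq k (b, j.+1).
Proof. by rewrite /up map_nseq. Qed.

Lemma up_cat s1 s2 : up (s1 ++ s2) = up s1 ++ up s2.
Proof. by rewrite /up map_cat. Qed.

Lemma DrawW_cat s1 s2 : DrawW (s1 ++ s2) =
  [seq u ++ up s2 | u <- DrawW s1] ++ [seq s1 ++ u | u <- DrawW s2].
Proof.
elim: s1 => [|a s1 IH] /=; first by rewrite map_id.
rewrite IH up_cat map_cat -!map_comp catA; congr (_ ++ _).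
rewrite map_cat -!map_comp; congr (_ ++ _); apply: eq_map => u /=; by rewrite catA.
Qed.

Lemma memDrawW_nseq c X u : (u \in DrawW (nseq c X)) <->
  exists i, i < c /\ exists2 r, r \in RtsW X & u = nseq i X ++ r ++ up (nseq (c - i.+1) X).
Proof.
elim: c u => [|c IH] u /=; first by split => // [[i [//]]].
rewrite mem_cat; split.
- case/orP.
    move=> /mapP [r Hr ->]; exists 0; split => //; exists r => //.
    by rewrite subn1.
  move=> /mapP [v /IH [i [Hi [r Hr ->]]] ->]; exists i.+1; split => //.
  by exists r.
- move=> [[|i] [Hi [r Hr ->]]].
    by apply/orP; left; apply/mapP; exists r => //; rewrite subn1.
  apply/orP; right; apply/mapP; exists (nseq i X ++ r ++ up (nseq (c - i.+1) X)) => //.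
  by apply/IH; exists i; split => //; exists r.
Qed.

Ltac permt := apply/permP => p; rewrite /= ?up_nseq ?count_cat ?count_nseq /= ?count_cat ?count_nseq /=;
  (repeat match goal with |- context [?q (false, ?x)] => is_var q; case: (q (false, x)) end); lia.

Lemma succ_mk a c d w' : w' \in succ (mk a c d) <->
 (exists i, i < c /\ (w' = mk a.+1 (c - i.+1) (i + d) \/ w' = mk a.+1 (c - i) (i + d).+1)) \/
 (exists j, j < d /\ (w' = mk a (c + d - j.+1) j \/ w' = mk a (c + d - j) j.+1)).
Proof.
rewrite /succ {1}/mk DrawW_cat; split.
- move=> /mapP [u]; rewrite mem_cat => /orP [] /mapP [v Hv ->] ->.
  + left; move/memDrawW_nseq: Hv => [i [Hi [r Hr ->]]]; exists i; split => //.
    move: Hr; rewrite !inE => /orP [] /eqP ->.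
    * by left; apply: rho_perm; rewrite /mk; permt.
    * by right; apply: rho_perm; rewrite /mk; permt.
  + right; move/memDrawW_nseq: Hv => [j [Hj [r Hr ->]]]; exists j; split => //.
    move: Hr; rewrite !inE => /orP [] /eqP ->.
    * by left; apply: rho_perm; rewrite /mk; permt.
    * by right; apply: rho_perm; rewrite /mk; permt.
- case => [[i [Hi H]]|[j [Hj H]]].
  + have [r Hr Hw] : exists2 r, r \in RtsW (false, a.+1) &
       w' = rho ((nseq i (false, a.+1) ++ r ++ up (nseq (c - i.+1) (false, a.+1))) ++ up (nseq d (false, a))).
      case: H => ->.
      * exists [::]; first by rewrite inE eqxx.
        by symmetry; apply: rho_perm; rewrite /mk; permt.
      * exists [:: (false, a.+1); (false, a.+2)]; first by rewrite !inE eqxx orbT.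
        by symmetry; apply: rho_perm; rewrite /mk; permt.
    apply/mapP; exists ((nseq i (false, a.+1) ++ r ++ up (nseq (c - i.+1) (false, a.+1))) ++ up (nseq d (false, a))) => //.
    rewrite mem_cat; apply/orP; left; apply/mapP; eexists => //.
    by apply/memDrawW_nseq; exists i; split => //; exists r.
  + have [r Hr Hw] : exists2 r, r \in RtsW (false, a) &
       w' = rho (nseq c (false, a.+1) ++ (nseq j (false, a) ++ r ++ up (nseq (d - j.+1) (false, a)))).
      case: H => ->.
      * exists [::]; first by rewrite inE eqxx.
        by symmetry; apply: rho_perm; rewrite /mk; permt.
      * exists [:: (false, a); (false, a.+1)]; first by rewrite !inE eqxx orbT.
        by symmetry; apply: rho_perm; rewrite /mk; permt.
    apply/mapP; exists (nseq c (false, a.+1) ++ (nseq j (false, a) ++ r ++ up (nseq (d - j.+1) (false, a)))) => //.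
    rewrite mem_cat; apply/orP; right; apply/mapP; eexists => //.
    by apply/memDrawW_nseq; exists j; split => //; exists r.
Qed.

Definition P n a c d : Prop := 0 < c /\
  ((a.+1 = n /\ c = 1 /\ d = n) \/
   (a = 0 /\ ((d = 0 /\ c < n /\ c %% 2 = n.+1 %% 2) \/ (c = n /\ d = 1))) \/
   (0 < a /\ a.+2 <= n /\ (c + d) %% 2 = n.+1 %% 2 /\ c + d <= n.+1 /\ (c + d = n.+1 -> 0 < d))).

Definition Sp n w := (w = [::] /\ n %% 2 = 1) \/ exists a c d, P n a c d /\ w = mk a c d.

Lemma Sp_up n a c d : (P n a.+1 c d \/ (c = 0 /\ d = 0 /\ n %% 2 = 1) \/ (c = 0 /\ P n a d 0)) ->
  Sp n (mk a.+1 c d).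
Proof.
case => [H|[[-> [-> H]]|[-> H]]].
- by right; exists a.+1, c, d.
- by left.
- by right; exists a, d, 0; split => //; rewrite /mk /= cats0.
Qed.

Lemma Sp_same n a c d : P n a c d -> Sp n (mk a c d).
Proof. by move=> H; right; exists a, c, d. Qed.

Ltac solveP := rewrite /P; split; [lia|];
  first [ left; repeat split; lia
        | right; left; split; [lia|]; first [left; repeat split; lia | right; repeat split; lia]
        | right; right; repeat split; lia ].

Ltac solveUp := first [ left; solveP | right; left; repeat split; lia | right; right; split; [lia | solveP] ].

Lemma fwd n a c d w' : P n a c d -> w' \in succ (mk a c d) -> Sp n.+1 w'.
Proof.
move=> HP /succ_mk [[i [Hi [->| ->]]]|[j [Hj [->| ->]]]];
move: HP => [Hc [[Ha [Hc1 Hd]] | [[Ha [[Hd [Hcn Hpar]] | [Hcn Hd]]] | [Ha1 [Ha2 [Hpar [HL HLd]]]]]]];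
  case: (posnP a) => Ha0; try (case: (posnP (c - i.+1)) => Hci; case: (posnP (i + d)) => Hid);
  try first [apply: Sp_up; solveUp | apply: Sp_same; solveP];
  case: (leqP n 1) => Hn1; first [apply: Sp_up; solveUp | apply: Sp_same; solveP].
Qed.

Lemma mk_shift a d : mk a.+1 0 d = mk a d 0.
Proof. by rewrite /mk /= cats0. Qed.

Ltac srcA A C D I b := exists (mk A C D); [apply: Sp_same; solveP|];
  apply/succ_mk; left; exists I; split; [lia|];
  (match b with true => left | false => right end).
Ltac srcB A C D I b := exists (mk A C D); [apply: Sp_same; solveP|];
  apply/succ_mk; right; exists I; split; [lia|];
  (match b with true => left | false => right end).

Lemma bwd n w' : 0 < n -> Sp n.+1 w' -> exists2 w, Sp n w & w' \in succ w.
Proof.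
move=> Hn [[-> Hpar]|[a [c [d [HP ->]]]]].
  srcA 0 1 0 0 true; by rewrite /mk subnn.
move: HP => [Hc [[Ha [Hc1 Hd]] | [[Ha [[Hd [Hcn Hpar]] | [Hcn Hd]]] | [Ha1 [Ha2 [Hpar [HL HLd]]]]]]].
- srcA (n - 1) 1 n 0 false; congr mk; lia.
- have [Hc2|Hc2] : c + 2 <= n \/ c = n by lia.
  + srcA 0 c.+1 0 c true; rewrite Ha Hd -mk_shift; congr mk; lia.
  + srcB 0 n 1 0 true; congr mk; lia.
- srcB 0 n 1 0 false; congr mk; lia.
- have : (c + d <= n /\ a.+2 <= n) \/ (c + d + 2 <= n /\ a.+2 = n.+1) \/
           (c + d = n /\ a.+2 = n.+1) \/ (c + d = n.+2 /\ 2 <= c /\ a.+2 <= n) \/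
           (c + d = n.+2 /\ 2 <= c /\ a.+2 = n.+1) \/
           (c + d = n.+2 /\ c = 1 /\ 2 <= a) \/ (c + d = n.+2 /\ c = 1 /\ a = 1) by lia.
  case => [H|[H|[H|[H|[H|[H|H]]]]]].
  + srcB a c d.+1 d true; congr mk; lia.
  + srcA (a - 1) c.+1 d 0 true; congr mk; lia.
  + srcB (n - 1) 1 n d true; congr mk; lia.
  + srcB a (c - 1) d (d - 1) false; congr mk; lia.
  + srcB (n - 1) 1 n (d - 1) false; congr mk; lia.
  + srcA (a - 1) 1 n 0 false; congr mk; lia.
  + srcA 0 n 1 (n - 1) false; congr mk; lia.
Qed.

Lemma W1 : W 1 = [:: [::]; mk 0 1 1].
Proof. by vm_compute. Qed.

Lemma W_char n w : 0 < n -> (w \in W n) <-> Sp n w.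
Proof.
elim: n w => [//|n IH] w _.
case: (posnP n) => Hn.
  subst n; rewrite W1 !inE; split.
  - case/orP => /eqP ->; first by left.
    right; exists 0, 1, 1; split => //; rewrite /P; lia.
  - case => [[-> _]|[a [c [d [HP ->]]]]]; first by rewrite eqxx.
    have [-> [-> ->]] : a = 0 /\ c = 1 /\ d = 1 by move: HP; rewrite /P; lia.
    by rewrite eqxx orbT.
rewrite /=; split.
- move=> /flatten_mapP [x /(IH x Hn) Hx Hw].
  case: Hx => [[Hx _]|[a [c [d [HP Hx]]]]]; first by move: Hw; rewrite Hx.
  by apply: (fwd HP); rewrite -Hx.
- move=> /(bwd Hn) [x Hx Hw]; apply/flatten_mapP; exists x => //.
  exact/(IH x Hn).
Qed.

Lemma uniq_allpairs_dep' (S T R : eqType) (f : S -> T -> R) (s : seq S) (t : S -> seq T) :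
  uniq s -> (forall x, x \in s -> uniq (t x)) ->
  (forall x x' y y', x \in s -> x' \in s -> y \in t x -> y' \in t x' -> f x y = f x' y' -> x = x' /\ y = y') ->
  uniq [seq f x y | x <- s, y <- t x].
Proof.
elim: s => //= x s IH /andP [Hx Hs] Ht Hf.
rewrite cat_uniq; apply/and3P; split.
- rewrite map_inj_in_uniq; first by apply: Ht; rewrite inE eqxx.
  move=> y y' Hy Hy' E; have [] := Hf x x y y'; rewrite ?inE ?eqxx //.
- apply/hasPn => z /allpairsPdep [x' [y' [Hx' Hy' ->]]].
  apply/mapP => [[y Hy E]].
  have [E1 _] : x' = x /\ y' = y.
    by apply: Hf => //; rewrite ?inE ?eqxx ?Hx' ?orbT.
  by move: Hx; rewrite -E1 Hx'.
- apply: IH => //.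
  + by move=> x' Hx'; apply: Ht; rewrite inE Hx' orbT.
  + by move=> x1 x2 y1 y2 H1 H2; apply: Hf; rewrite inE ?H1 ?H2 orbT.
Qed.

Definition Ls n := [seq i * 2 + 1 + n %% 2 | i <- iota 0 (n %/ 2)].

Lemma memLs n L : (L \in Ls n) <-> 0 < L < n /\ L %% 2 = n.+1 %% 2.
Proof.
split.
- by move=> /mapP [i]; rewrite mem_iota => Hi ->; lia.
- move=> H; apply/mapP; exists ((L - 1 - n %% 2) %/ 2); [rewrite mem_iota; lia | lia].
Qed.

Lemma uniq_Ls n : uniq (Ls n).
Proof. rewrite map_inj_uniq ?iota_uniq // => i j; lia. Qed.

Lemma size_Ls n : size (Ls n) = n %/ 2.
Proof. by rewrite size_map size_iota. Qed.

Lemma sumn_ar k b : sumn [seq i * 2 + b | i <- iota 0 k] + k = k * k + k * b.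
Proof.
elim: k => [//|k IH].
have -> : iota 0 k.+1 = iota 0 k ++ [:: k] by rewrite -addn1 iotaD.
rewrite map_cat sumn_cat /=.
lia.
Qed.

Definition M n := [seq (c, L - c) | L <- Ls n, c <- iota 1 L] ++ [seq (c, n.+1 - c) | c <- iota 1 n].

Lemma memM n c d : ((c, d) \in M n) <->
  0 < c /\ ((0 < c + d < n /\ (c + d) %% 2 = n.+1 %% 2) \/ (c + d = n.+1 /\ 0 < d)).
Proof.
rewrite mem_cat; split.
- case/orP.
  + move=> /allpairsPdep [L [c' [HL Hc [-> ->]]]]; move/memLs: HL; move: Hc; rewrite mem_iota; lia.
  + move=> /mapP [c' Hc [-> ->]]; move: Hc; rewrite mem_iota; lia.
- move=> [Hc [H|H]]; apply/orP.
  + left; apply/allpairsPdep; exists (c + d), c; split.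
    * by apply/memLs; lia.
    * rewrite mem_iota; lia.
    * congr pair; lia.
  + right; apply/mapP; exists c; [rewrite mem_iota; lia | congr pair; lia].
Qed.

Lemma uniq_M n : uniq (M n).
Proof.
rewrite cat_uniq; apply/and3P; split.
- apply: uniq_allpairs_dep'; first exact: uniq_Ls.
  + by move=> x _; apply: iota_uniq.
  + move=> x x' y y'; rewrite !mem_iota => _ _ Hy Hy' [E1 E2]; lia.
- apply/hasPn => [[c d]] /mapP [c' Hc [-> ->]] /=.
  apply/negP => /allpairsPdep [L [y [HL Hy [E1 E2]]]]; move/memLs: HL.
  move: Hc Hy; rewrite !mem_iota; lia.
- rewrite map_inj_uniq ?iota_uniq // => x y [] //.
Qed.

Lemma size_M n : size (M n) = sumn (Ls n) + n.
Proof.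
rewrite size_cat size_allpairs_dep size_map size_iota.
have -> : [seq size (iota 1 x) | x <- Ls n] = Ls n.
  by rewrite -[RHS]map_id; apply: eq_map => L; rewrite size_iota.
by [].
Qed.

Definition A1 n : seq (nat * nat * nat) := [seq (0, c, 0) | c <- Ls n].
Definition A2 n : seq (nat * nat * nat) := [seq (a, cd.1, cd.2) | a <- iota 1 (n - 2), cd <- M n].
Definition Tn n : seq (nat * nat * nat) := [:: (n - 1, 1, n); (0, n, 1)] ++ A1 n ++ A2 n.

Lemma memA1 n a c d : (((a, c), d) \in A1 n) <-> a = 0 /\ d = 0 /\ 0 < c < n /\ c %% 2 = n.+1 %% 2.
Proof.
split.
- by move=> /mapP [c' /memLs H [-> -> ->]].
- move=> [-> [-> H]]; apply/mapP; exists c => //; exact/memLs.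
Qed.

Lemma memA2 n a c d : (((a, c), d) \in A2 n) <-> 0 < a /\ a.+2 <= n /\
  0 < c /\ ((0 < c + d < n /\ (c + d) %% 2 = n.+1 %% 2) \/ (c + d = n.+1 /\ 0 < d)).
Proof.
split.
- move=> /allpairsPdep [a' [[c' d'] [Ha /memM H [-> -> ->]]]]; move: Ha; rewrite mem_iota; lia.
- move=> [Ha1 [Ha2 H]]; apply/allpairsPdep; exists a, (c, d); split => //.
  + rewrite mem_iota; lia.
  + exact/memM.
Qed.

Lemma memTn n a c d : 2 < n -> (((a, c), d) \in Tn n) <-> P n a c d.
Proof.
move=> Hn; rewrite /Tn !mem_cat !inE; split.
- case/orP => [/orP [/eqP [-> -> ->] | /eqP [-> -> ->]] | /orP [/memA1 H | /memA2 H]];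
    rewrite /P; lia.
- move=> [Hc [[Ha [Hc1 Hd]] | [[Ha [[Hd [Hcn Hpar]] | [Hcn Hd]]] | [Ha1 [Ha2 [Hpar [HL HLd]]]]]]].
  + have -> : a = n - 1 by lia.
    by rewrite Hc1 Hd eqxx.
  + apply/orP; right; apply/orP; left; apply/memA1; lia.
  + by rewrite Ha Hcn Hd eqxx orbT.
  + apply/orP; right; apply/orP; right; apply/memA2; lia.
Qed.

Lemma uniq_Tn n : 2 < n -> uniq (Tn n).
Proof.
move=> Hn; rewrite /Tn cat_uniq; apply/and3P; split.
- rewrite /= inE andbT; apply/negP => /eqP [E1 E2 E3]; lia.
- apply/hasPn => [[[a c] d]]; rewrite mem_cat => /orP [/memA1 H | /memA2 H];
    rewrite !inE; apply/negP => /orP [] /eqP [E1 E2 E3]; lia.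
- rewrite cat_uniq; apply/and3P; split.
  + rewrite map_inj_uniq ?uniq_Ls // => x y [] //.
  + apply/hasPn => [[[a c] d]] /memA2 H; apply/negP => /memA1 H'; lia.
  + apply: uniq_allpairs_dep'; first exact: iota_uniq.
    * by move=> x _; apply: uniq_M.
    * by move=> x x' [y1 y2] [y1' y2'] _ _ _ _ [-> -> ->].
Qed.

Lemma size_Tn n : size (Tn n) = 2 + n %/ 2 + (n - 2) * (sumn (Ls n) + n).
Proof.
rewrite /Tn !size_cat /A1 /A2 size_map size_Ls size_allpairs size_iota size_M /=.
lia.
Qed.

Definition Ln n : seq word :=
  (if n %% 2 == 1 then [:: [::]] else [::]) ++ [seq mk t.1.1 t.1.2 t.2 | t <- Tn n].

Lemma mk_inj a c d a' c' d' : 0 < c -> 0 < c' -> mk a c d = mk a' c' d' ->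
  a = a' /\ c = c' /\ d = d'.
Proof.
move=> Hc Hc' E.
have Ha : a = a'.
  move: E; case: c Hc => // c _; case: c' Hc' => // c' _; rewrite /mk /=.
  by case.
subst a'; split => //.
have Ec : count_mem (false, a.+1) (mk a c d) = count_mem (false, a.+1) (mk a c' d') by rewrite E.
have Hne : ((false, a) == (false, a.+1)) = false.
  by apply/eqP => [[]]; lia.
move: Ec; rewrite /mk !count_cat !count_nseq /= eqxx Hne /= => Ec.
have Es : size (mk a c d) = size (mk a c' d') by rewrite E.
move: Es; rewrite /mk !size_cat !size_nseq; lia.
Qed.

Lemma memLn n w : 2 < n -> (w \in Ln n) <-> Sp n w.
Proof.
move=> Hn; rewrite /Ln mem_cat; split.
- case/orP.
  + by case: eqP => //= H; rewrite inE => /eqP ->; left.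
  + move=> /mapP [[[a c] d] /(memTn _ _ _ Hn) H ->]; right; by exists a, c, d.
- case => [[-> H]|[a [c [d [H ->]]]]].
  + by rewrite H eqxx inE eqxx.
  + apply/orP; right; apply/mapP; exists (a, c, d) => //; exact/(memTn _ _ _ Hn).
Qed.

Lemma uniq_Ln n : 2 < n -> uniq (Ln n).
Proof.
move=> Hn; rewrite /Ln cat_uniq; apply/and3P; split.
- by case: ifP.
- apply/hasPn => w /mapP [[[a c] d] /(memTn _ _ _ Hn) H ->].
  case: ifP => // _; rewrite inE; apply/negP => /eqP.
  by move: H => [Hc _]; case: c Hc.
- rewrite map_inj_in_uniq ?uniq_Tn // => [[[a c] d]] [[a' c'] d'] /(memTn _ _ _ Hn) [H1 _] /(memTn _ _ _ Hn) [H2 _] /= E.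
  by have [-> [-> ->]] := mk_inj H1 H2 E.
Qed.

Lemma sumn_Ls n : sumn (Ls n) + n %/ 2 = n %/ 2 * (n %/ 2) + n %/ 2 * (1 + n %% 2).
Proof.
rewrite -sumn_ar /Ls; congr (sumn _ + _); apply: eq_map => i; lia.
Qed.

Lemma Omega_size (K : comNzRingType) (charK0 : forall m : nat, ((m.+1)%:R != 0 :> K)%R) n :
  2 < n -> Omega (Dpow n (x0 K)) = (n %% 2 == 1) + size (Tn n).
Proof.
move=> Hn; rewrite (Omega_undup charK0 (Dpow_one K n)) Dpow_fst.
have -> : size (undup (W n)) = size (Ln n).
  apply: perm_size; apply: uniq_perm; [exact: undup_uniq | exact: uniq_Ln |].
  move=> w; rewrite mem_undup; apply/idP/idP.
  - by move=> /(W_char w (ltnW (ltnW Hn))) /(memLn w Hn).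
  - by move=> /(memLn w Hn) /(W_char w (ltnW (ltnW Hn))).
rewrite /Ln size_cat size_map; by case: (n %% 2 == 1).
Qed.

Theorem proposition3p9 (K : comNzRingType)
  (charK0 : forall m : nat, ((m.+1)%:R != 0 :> K)%R) (n k : nat) :
  (3 <= n)%N ->
  (n = k.*2.+1 -> Omega (Dpow n (x0 K)) = 2 * k ^ 3 + 5 * k ^ 2 + 2)%N /\
  (n = k.*2 -> Omega (Dpow n (x0 K)) = (k + 2) * (2 * k ^ 2 - 2 * k + 1))%N.
Proof.
move=> Hn; rewrite (Omega_size charK0 Hn) size_Tn.
have HS := sumn_Ls n.
split => En.
- have H1 : n %% 2 = 1 by rewrite En; lia.
  have H2 : n %/ 2 = k by rewrite En; lia.
  rewrite H1 H2 /= in HS *.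
  have Hk : 0 < k by lia.
  have HS' : sumn (Ls n) = k * k + k by lia.
  rewrite HS' En; case: k Hk {En H1 H2 HS HS'} => // k _.
  rewrite !expnS expn0 !muln1 -!muln2; lia.
- have H1 : n %% 2 = 0 by rewrite En; lia.
  have H2 : n %/ 2 = k by rewrite En; lia.
  rewrite H1 H2 /= in HS *.
  have Hk : 1 < k by lia.
  have HS' : sumn (Ls n) = k * k by lia.
  rewrite HS' En; case: k Hk {En H1 H2 HS HS'} => // k Hk.
  rewrite !expnS expn0 !muln1 -!muln2; nia.
Qed.
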